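(* Let ${\bf v}=(v^1,\dots,v^n)$ and consider a $2+1$ dimensional system in Godunov form $$(F_{0,i})_t+(F_{1,i})_x+(F_{2,i})_y=0,\qquad i=1,\dots,n,$$ where $F_0,F_1,F_2$ are functions of ${\bf v}$ and $F_{\alpha,i}=\partial F_\alpha/\partial v^i$. Let $l^1,\dots,l^n,l$ be (inhomogeneous) linear forms in ${\bf v}$ whose $(n+1)\times(n+1)$ coefficient matrix is nondegenerate, and define $$\tilde v^i=\frac{l^i({\bf v})}{l({\bf v})},\qquad \tilde F_\alpha=\frac{F_\alpha}{l({\bf v})},\quad \alpha=0,1,2,$$ with $\tilde F_\alpha$ regarded as functions of $\tilde{\bf v}$. Then the system is equivalent to the system of the same Godunov form $$(\tilde F_{0,i})_t+(\tilde F_{1,i})_x+(\tilde F_{2,i})_y=0,\qquad i=1,\dots,n,\qquad \tilde F_{\alpha,i}=\partial\tilde F_\alpha/\partial\tilde v^i,$$ i.e. the Godunov representation is form-invariant under this projective action of $GL_{n+1}$. *)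

(* Defs.v *)
From HB Require Import structures.
From mathcomp Require Import all_boot all_order all_algebra.
From mathcomp Require Import all_classical all_reals all_analysis.
Set Implicit Arguments. Unset Strict Implicit. Unset Printing Implicit Defensive.
Import Order.TTheory GRing.Theory Num.Theory.
Import numFieldNormedType.Exports.
Local Open Scope ring_scope.
Local Open Scope classical_set_scope.

Section Godunov.
Variable R : realType.

Definition partial (m : nat) (f : 'rV[R]_m -> R) (i : 'I_m) (x : 'rV[R]_m) : R :=
  derive f x (delta_mx 0 i).

Definition hom (n : nat) (v : 'rV[R]_n) : 'rV[R]_(n + 1) :=
  row_mx v (const_mx 1).

(* The coefficient matrix M : 'M_(n+1) encodes n+1 inhomogeneous linear forms:
   column k of M holds the coefficients of the k-th form (coefficients of
   v^1..v^n, then the constant term).  Columns 0..n-1 are l^1..l^n, and the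
   last column is l. *)
Definition lforms (n : nat) (M : 'M[R]_(n + 1)) (v : 'rV[R]_n) : 'rV[R]_n :=
  lsubmx (hom v *m M).
Definition lform (n : nat) (M : 'M[R]_(n + 1)) (v : 'rV[R]_n) : R :=
  rsubmx (hom v *m M) 0 0.

Definition projmap (n : nat) (M : 'M[R]_(n + 1)) (v : 'rV[R]_n) : 'rV[R]_n :=
  (lform M v)^-1 *: lforms M v.

(* F~_a regarded as a function of v~: v = projmap (invmx M) v~ is the inverse
   projective transformation, and F~_a(v~) = F_a(v) / l(v). *)
Definition Ftilde (n : nat) (M : 'M[R]_(n + 1)) (F : 'I_3 -> 'rV[R]_n -> R)
  (a : 'I_3) (w : 'rV[R]_n) : R :=
  F a (projmap (invmx M) w) / lform M (projmap (invmx M) w).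

Definition utilde (n : nat) (M : 'M[R]_(n + 1)) (u : 'rV[R]_3 -> 'rV[R]_n)
  (p : 'rV[R]_3) : 'rV[R]_n := projmap M (u p).

Definition godunov (n : nat) (F : 'I_3 -> 'rV[R]_n -> R)
  (u : 'rV[R]_3 -> 'rV[R]_n) (p : 'rV[R]_3) : Prop :=
  forall i : 'I_n,
    \sum_(a < 3) partial (fun q => partial (F a) i (u q)) a p = 0.

End Godunov.

(* Main.v *)
Require Import Defs.
From HB Require Import structures.
From mathcomp Require Import all_boot all_order all_algebra.
From mathcomp Require Import all_classical all_reals all_analysis.
From mathcomp Require Import ring.
Import Order.TTheory GRing.Theory Num.Theory.
Import numFieldNormedType.Exports.
Local Open Scope ring_scope.
Local Open Scope classical_set_scope.

Section Helpers.
Variable R : realType.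

Lemma diff_mx (V : normedModType R) m n (h : V -> 'M[R]_(m,n)) x :
  (forall i j, differentiable (fun y => h y i j) x) -> differentiable h x.
Proof.
move=> H.
have -> : h = (\sum_(i < m) \sum_(j < n) (fun y => h y i j *: delta_mx i j)).
  apply/funext => y; rewrite [LHS]matrix_sum_delta !fct_sumE.
  by apply: eq_bigr => i _; rewrite fct_sumE.
apply: differentiable_sum => i; apply: differentiable_sum => j.
exact: differentiableZl.
Qed.

Lemma diff_coordc (V : normedModType R) m n (h : V -> 'M[R]_(m,n)) x i j :
  differentiable h x -> differentiable (fun y => h y i j) x.
Proof.
move=> dh.
exact: (@differentiable_comp _ _ _ _ h (fun N : 'M[R]_(m, n) => N i j) x dh (differentiable_coord _ i j)).
Qed.

Lemma derive_coord (V : normedModType R) m n (h : V -> 'M[R]_(m,n)) x v i j :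
  differentiable h x -> 'D_v (fun y => h y i j) x = ('D_v h x) i j.
Proof.
move=> dh; rewrite (derive_mx (diff_derivable (v:=v) dh)) mxE //.
Qed.

Lemma derive_chain (V : normedModType R) n (g : 'rV[R]_n -> R) (h : V -> 'rV[R]_n) x v :
  differentiable h x -> differentiable g (h x) ->
  'D_v (g \o h) x = \sum_(j < n) ('D_v h x) 0 j * partial g j (h x).
Proof.
move=> dh dg.
rewrite deriveE; last exact: differentiable_comp.
rewrite diff_comp // /= -(deriveE (f:=h) (a:=x) v) //.
rewrite [X in 'd g (h x) X]row_sum_delta linear_sum.
apply: eq_bigr => j _; by rewrite linearZ /= /partial !deriveE.
Qed.

End Helpers.

Section Alg.
Variable R : realType.

Lemma hom_l n (v : 'rV[R]_n) j : Defs.hom v 0 (lshift 1 j) = v 0 j.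
Proof. by rewrite /hom row_mxEl. Qed.

Lemma hom_r n (v : 'rV[R]_n) k : Defs.hom v 0 (rshift n k) = 1.
Proof. by rewrite /hom row_mxEr mxE. Qed.

Lemma homM n (v : 'rV[R]_n) (M : 'M[R]_(n + 1)) k :
  (Defs.hom v *m M) 0 k = \sum_(j < n) v 0 j * M (lshift 1 j) k + M (rshift n 0) k.
Proof.
rewrite mxE big_split_ord /= big_ord1 hom_r mul1r; congr (_ + _).
by apply: eq_bigr => j _; rewrite hom_l.
Qed.

Lemma lformE n (M : 'M[R]_(n + 1)) v : lform M v = (Defs.hom v *m M) 0 (rshift n 0).
Proof. by rewrite /lform mxE. Qed.

Lemma lformsE n (M : 'M[R]_(n + 1)) v j : lforms M v 0 j = (Defs.hom v *m M) 0 (lshift 1 j).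
Proof. by rewrite /lforms mxE. Qed.

Lemma hom_projmap n (M : 'M[R]_(n + 1)) v : lform M v != 0 ->
  Defs.hom (projmap M v) = (lform M v)^-1 *: (Defs.hom v *m M).
Proof.
move=> L0; rewrite /projmap.
rewrite -[Defs.hom v *m M]hsubmxK scale_row_mx {1}/Defs.hom /lforms; congr row_mx.
apply/rowP => k; rewrite ord1 !mxE.
have E := @lformE n M v; rewrite mxE in E.
by rewrite -E mulVf.
Qed.

Lemma projmap_inv n (P : 'M[R]_(n + 1)) v : P \in unitmx -> lform P v != 0 ->
  lform (invmx P) (projmap P v) = (lform P v)^-1 /\
  projmap (invmx P) (projmap P v) = v.
Proof.
move=> uP L0.
have H : Defs.hom (projmap P v) *m invmx P = (lform P v)^-1 *: Defs.hom v.
  by rewrite hom_projmap // -scalemxAl mulmxK.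
have H1 : lform (invmx P) (projmap P v) = (lform P v)^-1.
  by rewrite lformE H mxE hom_r mulr1.
split => //.
rewrite /projmap H1 invrK; apply/rowP => j.
by rewrite mxE lformsE H mxE hom_l mulrA mulfV ?mul1r.
Qed.

End Alg.

Section S.
Variable R : realType.
Lemma derive_c n (w v : 'rV[R]_n) j : 'D_v (fun y : 'rV[R]_n => y 0 j) w = v 0 j.
Proof.
have := derive_mx (@derivable_id _ _ w v); rewrite derive_id => E.
by rewrite {2}E mxE.
Qed.
Lemma diff_c n (w : 'rV[R]_n) j : differentiable (fun y : 'rV[R]_n => y 0 j) w.
Proof. exact: differentiable_coord. Qed.

Lemma affE n (N : 'M[R]_(n + 1)) k :
  (fun w => (Defs.hom w *m N) 0 k) =
  (\sum_(j < n) (fun w : 'rV[R]_n => w 0 j * N (lshift 1 j) k)) + cst (N (rshift n 0) k).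
Proof.
apply/funext => w /=; rewrite fct_sumE mxE big_split_ord /= big_ord1.
rewrite /Defs.hom row_mxEr mxE mul1r; congr (_ + _).
by apply: eq_bigr => j _; rewrite row_mxEl.
Qed.

Lemma aff_diff n (N : 'M[R]_(n + 1)) k w : differentiable (fun w => (Defs.hom w *m N) 0 k) w.
Proof.
rewrite affE; apply: differentiableD; last exact: differentiable_cst.
apply: differentiable_sum => j; apply: differentiableM => //; exact: diff_c.
Qed.

Lemma aff_derive n (N : 'M[R]_(n + 1)) k w v :
  'D_v (fun w => (Defs.hom w *m N) 0 k) w = \sum_(j < n) v 0 j * N (lshift 1 j) k.
Proof.
rewrite affE deriveD; last 2 first.
- apply: derivable_sum => j; apply: diff_derivable; apply: differentiableM => //; exact: diff_c.
- exact: derivable_cst.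
rewrite derive_cst addr0 derive_sum; last first.
  by move=> j; apply: diff_derivable; apply: differentiableM => //; exact: diff_c.
apply: eq_bigr => j _.
rewrite (_ : (fun _ => _) = (fun y : 'rV[R]_n => y 0 j) * cst (N (lshift 1 j) k)) //.
rewrite deriveM; last 2 first.
- apply: diff_derivable; exact: diff_c.
- exact: derivable_cst.
by rewrite derive_cst scaler0 add0r derive_c /= mulrC.
Qed.
End S.

Section S.
Variable R : realType.

Lemma sum_delta n (i : 'I_n) (c : 'I_n -> R) :
  \sum_(j < n) (delta_mx 0 i : 'rV[R]_n) 0 j * c j = c i.
Proof.
rewrite (bigD1 i) //= big1 ?addr0; first by rewrite mxE !eqxx mul1r.
by move=> j ji; rewrite mxE (negPf ji) andbF mul0r.
Qed.

Lemma Ftilde_partial n (M : 'M[R]_(n + 1)) (F : 'I_3 -> 'rV[R]_n -> R) a i w :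
  M \in unitmx -> lform (invmx M) w != 0 ->
  differentiable (F a) (projmap (invmx M) w) ->
  partial (Ftilde M F a) i w =
  \sum_(j < n) invmx M (lshift 1 i) (lshift 1 j) * partial (F a) j (projmap (invmx M) w)
  + invmx M (lshift 1 i) (rshift n 0) *
    (F a (projmap (invmx M) w) - \sum_(j < n) (projmap (invmx M) w) 0 j *
        partial (F a) j (projmap (invmx M) w)).
Proof.
move=> uM mu0 dF.
set N := invmx M.
set mu := fun w => (Defs.hom w *m N) 0 (rshift n 0).
set phi := projmap N.
have muE : forall w, lform N w = mu w by move=> w'; rewrite lformE.
have dmu : forall w, differentiable mu w by move=> w'; exact: aff_diff.
have cmu : \forall w' \near w, mu w' != 0.
  have c := differentiable_continuous (dmu w).
  apply: (cvgr_neq0 _ c).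
  by rewrite -muE.
have nearE : \near w, Ftilde M F a w = (mu * (F a \o phi)) w.
  near=> w'.
  have mw' : lform N w' != 0 by rewrite muE; near: w'.
  have uN : N \in unitmx by rewrite unitmx_inv.
  have [H1 _] := @projmap_inv R n N w' uN mw'.
  rewrite invmxK in H1.
  by rewrite /Ftilde -/N H1 invrK muE mulrC.
rewrite /partial (near_eq_derive _ nearE).
have mu0' : mu w != 0 by rewrite -muE.
set psi := fun j w => (Defs.hom w *m N) 0 (lshift 1 j).
have phiE : forall j, (fun w' => phi w' 0 j) = (fun w' => (mu w')^-1) * psi j.
  by move=> j; apply/funext => w'; rewrite /phi /projmap /= mxE lformsE muE.
have dphic : forall j, differentiable (fun w' => phi w' 0 j) w.
  move=> j; rewrite phiE; apply: differentiableM; last exact: aff_diff.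
  exact: differentiableV.
have dphi : differentiable phi w.
  by apply: diff_mx => i' j; rewrite ord1.
have Dmu : forall v, 'D_v mu w = \sum_(j < n) v 0 j * N (lshift 1 j) (rshift n 0).
  move=> v; exact: aff_derive.
have Dphi : forall j, ('D_'e_i phi w) 0 j =
    (mu w)^-1 * N (lshift 1 i) (lshift 1 j) - psi j w * (mu w)^-2 * N (lshift 1 i) (rshift n 0).
  move=> j; rewrite -derive_coord // phiE deriveM; last 2 first.
  - exact/diff_derivable/differentiableV.
  - exact/diff_derivable/aff_diff.
  rewrite deriveV //; last exact/diff_derivable.
  rewrite Dmu aff_derive !sum_delta /=.
  rewrite /GRing.scale /=. ring.
rewrite deriveM; last 2 first.
- exact/diff_derivable.
- exact/diff_derivable/differentiable_comp.
rewrite derive_chain // Dmu sum_delta.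
under eq_bigr do rewrite Dphi.
have phij : forall j, phi w 0 j = (mu w)^-1 * psi j w.
  by move=> j; have := congr1 (fun f => f w) (phiE j).

rewrite /GRing.scale /= mulr_sumr mulrBr mulr_sumr /partial.
rewrite addrCA -sumrB addrC; congr (_ + _); last by rewrite mulrC.
apply: eq_bigr => j _; rewrite (phij j) /partial; move: mu0'; move: (mu w : R) => m m0; field.
by [].
Unshelve. all: by end_near.
Qed.
End S.

Section S.
Variable R : realType.

Lemma linalg n (M : 'M[R]_(n + 1)) (v : 'rV[R]_n) (E : 'I_n -> R) :
  M \in unitmx -> lform M v != 0 ->
  (forall i, \sum_(j < n) invmx M (lshift 1 i) (lshift 1 j) * E j
     - invmx M (lshift 1 i) (rshift n 0) * \sum_(j < n) v 0 j * E j = 0) ->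
  forall j, E j = 0.
Proof.
move=> uM L0 H.
pose X : 'cV[R]_(n + 1) := col_mx (\col_j E j) (const_mx (- \sum_(j < n) v 0 j * E j)).
pose Y := invmx M *m X.
have XE : X = M *m Y by rewrite /Y mulKVmx.
have Yl : forall i (z : 'I_1), Y (lshift 1 i) z = 0.
  move=> i z; rewrite ord1 -(H i) /Y mxE big_split_ord /= big_ord1.
  rewrite col_mxEd mxE mulrN; congr (_ - _).
  by apply: eq_bigr => j _; rewrite col_mxEu mxE.
have hX : (Defs.hom v *m X) 0 0 = 0.
  rewrite mxE big_split_ord /= big_ord1 hom_r col_mxEd mxE mul1r.
  rewrite (eq_bigr (fun j => v 0 j * E j)) ?subrr // => j _.
  by rewrite hom_l col_mxEu mxE.
have Yr : Y (rshift n 0) 0 = 0.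
  move: hX; rewrite XE mulmxA mxE big_split_ord /= big_ord1.
  rewrite big1 ?add0r; last first.
    by move=> j _; rewrite (_ : Y (lshift 1 j) 0 = 0) ?mulr0 //; apply: Yl.
  have -> : ord0 = 0 :> 'I_1 by [].
  rewrite -lformE => /eqP; rewrite mulf_eq0 (negPf L0) /= => /eqP //.
have Y0 : Y = 0.
  apply/matrixP => k l; rewrite ord1 [in RHS]mxE.
  case: (split_ordP k) => j ->; first exact: Yl.
  by rewrite ord1; exact: Yr.
move=> j; transitivity (X (lshift 1 j) 0); first by rewrite col_mxEu mxE.
by rewrite XE Y0 mulmx0 mxE.
Qed.
End S.

Section S.
Variable R : realType.

Lemma derive_G (V : normedModType R) n (N : 'M[R]_(n + 1)) (F0 : 'rV[R]_n -> R)
  (u : V -> 'rV[R]_n) p v i :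
  differentiable u p -> differentiable F0 (u p) ->
  (forall j, differentiable (partial F0 j) (u p)) ->
  'D_v (fun q => \sum_(j < n) N (lshift 1 i) (lshift 1 j) * partial F0 j (u q)
     + N (lshift 1 i) (rshift n 0) * (F0 (u q) - \sum_(j < n) u q 0 j * partial F0 j (u q))) p
  = \sum_(j < n) N (lshift 1 i) (lshift 1 j) * 'D_v (fun q => partial F0 j (u q)) p
    - N (lshift 1 i) (rshift n 0) * \sum_(j < n) u p 0 j * 'D_v (fun q => partial F0 j (u q)) p.
Proof.
move=> du dF dP.
pose f j := partial F0 j \o u.
pose c j := fun q => u q 0 j.
have df : forall j, differentiable (f j) p by move=> j; exact: differentiable_comp.
have dc : forall j, differentiable (c j) p by move=> j; exact: diff_coordc.
have dg : differentiable (F0 \o u) p by exact: differentiable_comp.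
have dcf : forall j, differentiable (c j * f j) p by move=> j; exact: differentiableM.
rewrite (_ : (fun q => _) = \sum_(j < n) (N (lshift 1 i) (lshift 1 j) \*: f j)
   + N (lshift 1 i) (rshift n 0) \*: ((F0 \o u) - \sum_(j < n) (c j * f j))); last first.
  by apply/funext => q; rewrite /= !fct_sumE.
have dS1 : forall j, differentiable (N (lshift 1 i) (lshift 1 j) \*: f j) p.
  by move=> j; exact: differentiableZ.
have dS2 : differentiable (\sum_(j < n) (c j * f j)) p by exact: differentiable_sum.
have dS3 : differentiable ((F0 \o u) - \sum_(j < n) (c j * f j)) p by exact: differentiableB.
rewrite deriveD; last 2 first.
- by apply: diff_derivable; exact: differentiable_sum.
- by apply: diff_derivable; exact: differentiableZ.
rewrite derive_sum; last by move=> j; exact: diff_derivable.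
rewrite deriveZ; last exact: diff_derivable.
rewrite deriveB; last 2 first.
- exact: diff_derivable.
- exact: diff_derivable.
rewrite derive_sum; last by move=> j; exact: diff_derivable.
rewrite derive_chain //.
rewrite (eq_bigr (fun j => N (lshift 1 i) (lshift 1 j) * 'D_v (f j) p)); last first.
  by move=> j _; rewrite deriveZ //; exact: diff_derivable.
rewrite [X in _ - X](eq_bigr (fun j => c j p * 'D_v (f j) p + f j p * ('D_v u p) 0 j)); last first.
  move=> j _; rewrite deriveM; [|exact: diff_derivable|exact: diff_derivable].
  by rewrite /c derive_coord.
rewrite big_split /=.
have e : \sum_(j < n) ('D_v u p) 0 j * partial F0 j (u p) = \sum_(j < n) f j p * ('D_v u p) 0 j.
  by apply: eq_bigr => j _; rewrite mulrC.
rewrite e opprD addrCA subrr addr0.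
by rewrite /GRing.scale /= mulrN.
Qed.
End S.

Theorem proposition1 (R : realType) (n : nat) (M : 'M[R]_(n + 1))
  (F : 'I_3 -> 'rV[R]_n -> R) (U : set 'rV[R]_n)
  (D : set 'rV[R]_3) (u : 'rV[R]_3 -> 'rV[R]_n) :
  M \in unitmx ->
  open U ->
  (forall v, U v -> lform M v != 0) ->
  (forall a v, U v -> differentiable (F a) v) ->
  (forall a i v, U v -> differentiable (partial (F a) i) v) ->
  open D ->
  (forall p, D p -> differentiable u p) ->
  (forall p, D p -> U (u p)) ->
  ((forall p, D p -> godunov F u p) <->
   (forall p, D p -> godunov (Ftilde M F) (utilde M u) p)).
Proof.
move=> uM oU l0 dF dFp oD du uU.
set N := invmx M.
pose E p j := \sum_(a < 3) partial (fun q => partial (F a) j (u q)) a p.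
have key : forall p, D p -> forall i,
  \sum_(a < 3) partial (fun q => partial (Ftilde M F a) i (utilde M u q)) a p =
  \sum_(j < n) N (lshift 1 i) (lshift 1 j) * E p j
  - N (lshift 1 i) (rshift n 0) * \sum_(j < n) u p 0 j * E p j.
  move=> p Dp i.
  have nD : \forall q \near p, D q by apply: open_nbhs_nbhs; split.
  transitivity (\sum_(a < 3) (\sum_(j < n) N (lshift 1 i) (lshift 1 j) *
      partial (fun q => partial (F a) j (u q)) a p
    - N (lshift 1 i) (rshift n 0) * \sum_(j < n) u p 0 j *
      partial (fun q => partial (F a) j (u q)) a p)).
    apply: eq_bigr => a _.
    have nearE : \forall q \near p, partial (Ftilde M F a) i (utilde M u q) =
      \sum_(j < n) N (lshift 1 i) (lshift 1 j) * partial (F a) j (u q)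
      + N (lshift 1 i) (rshift n 0) * (F a (u q) - \sum_(j < n) u q 0 j * partial (F a) j (u q)).
      near=> q.
      have Dq : D q by near: q.
      have [H1 H2] := @projmap_inv R n M (u q) uM (l0 _ (uU _ Dq)).
      rewrite /utilde Ftilde_partial //; first by rewrite H2.
      - rewrite (_ : lform (invmx M) (projmap M (u q)) = (lform M (u q))^-1) ?invr_eq0.
          exact: l0 (uU _ Dq).
        exact: H1.
      - rewrite (_ : projmap (invmx M) (projmap M (u q)) = u q); last exact: H2.
        by apply: dF; apply: uU.
    rewrite /partial (near_eq_derive _ nearE) derive_G //.
    - exact: du.
    - by apply: dF; apply: uU.
    - by move=> j; apply: dFp; apply: uU.
  rewrite sumrB; congr (_ - _).
    rewrite exchange_big /=; apply: eq_bigr => j _.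
    by rewrite /E mulr_sumr.
  rewrite -mulr_sumr; congr (_ * _).
  rewrite exchange_big /=; apply: eq_bigr => j _.
  by rewrite /E mulr_sumr.
split.
- move=> G p Dp i; rewrite key // /E.
  rewrite big1 ?sub0r; last by move=> j _; rewrite (G p Dp j) mulr0.
  by rewrite big1 ?mulr0 ?oppr0 // => j _; rewrite (G p Dp j) mulr0.
- move=> G p Dp j.
  apply: (@linalg R n M (u p) (E p)) => //; first exact: l0 (uU _ Dp).
  by move=> i; rewrite -key //; apply: G.
Unshelve. all: by end_near.
Qed.
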